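(* Let $X$ be a compact space and let $Y$ be a zero-dimensional closed subspace of $X$. If $F$ is a closed subset of $C(X,[0,1])$ such that $f(Y)$ is infinite for every $f\in F$, then $F$ is a $Z$-set in $C(X,[0,1])$.
   Context: Compact spaces are Hausdorff. $C(X,[0,1])$ is the space of continuous maps $X\to[0,1]$ with the sup-metric topology. For topological spaces $K,T$, $C(K,T)$ denotes the space of continuous maps $K\to T$ with the compact-open topology. A closed subset $F$ of a topological space $T$ is a $Z$-set in $T$ if for every compact (Hausdorff) space $K$ the set $C(K,T\setminus F)$ is dense in $C(K,T)$. *)

(* Defs.v *)
From HB Require Import structures.
From mathcomp Require Import all_boot all_order all_algebra.
From mathcomp Require Import all_classical all_reals all_analysis.

Import Order.TTheory GRing.Theory Num.Theory.
Import numFieldNormedType.Exports.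
Local Open Scope classical_set_scope.
Local Open Scope ring_scope.

Definition zero_dim_space (T : topologicalType) : Prop :=
  forall (x : T) (U : set T), open U -> U x ->
    exists V : set T, [/\ clopen V, V x & V `<=` U].

(* A subspace Y of X is zero-dimensional if Y, with the subspace topology
   (the initial topology of the inclusion, i.e. the type [set_type Y]),
   is zero-dimensional. *)
Definition zero_dim_subspace {X : topologicalType} (Y : set X) : Prop :=
  zero_dim_space (set_type Y).

(* The underlying set of C(X,[0,1]) inside the space of all functions X -> R
   equipped with the topology of uniform convergence (= sup-metric topology
   on bounded functions). *)
Definition CX01_set (R : realType) (X : topologicalType) : set {uniform X -> R} :=
  [set f : {uniform X -> R} |
     continuous (f : X -> R) /\ forall x : X, 0 <= (f : X -> R) x <= 1].

Definition CX01 (R : realType) (X : topologicalType) : topologicalType :=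
  set_type (CX01_set R X).

Definition Cmaps_set (K T : topologicalType) : set {compact-open, K -> T} :=
  [set g : {compact-open, K -> T} | continuous (g : K -> T)].

Definition Cmaps (K T : topologicalType) : topologicalType :=
  set_type (Cmaps_set K T).

Definition Z_set {T : topologicalType} (F : set T) : Prop :=
  closed F /\
  forall K : topologicalType, compact [set: K] -> hausdorff_space K ->
    dense [set g : Cmaps K T | forall k : K, ~ F (sval g k)].

(* Main.v *)
Require Import Defs.
From HB Require Import structures.
From mathcomp Require Import all_boot all_order all_algebra.
From mathcomp Require Import all_classical all_reals all_analysis.
From mathcomp Require Import ring lra.
Import Order.TTheory GRing.Theory Num.Theory.
Import numFieldNormedType.Exports.
Local Open Scope classical_set_scope.
Local Open Scope ring_scope.

Lemma Topen {R : realType} {X : topologicalType} {O : set (CX01 R X)} :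
  open O -> exists2 U : set {uniform X -> R}, open U & O = sval @^-1` U.
Proof. by case=> U oU <-; exists U. Qed.

Lemma Copen (K T : topologicalType) (O : set (Cmaps K T)) :
  open O -> exists2 U : set {compact-open, K -> T}, open U & O = sval @^-1` U.
Proof. by case=> U oU <-; exists U. Qed.

Lemma unbhsP {R : realType} {X : topologicalType} (f : {uniform X -> R}) P :
  nbhs f P -> exists2 e : R, 0 < e & forall h : {uniform X -> R},
     (forall x, `|f x - h x| < e) -> P h.
Proof.
move/uniform_nbhs => [E [entE sP]].
move: entE; rewrite -entourage_ballE => -[e e0 eE].
exists e => // h he; apply: sP => y _; apply: eE.
by rewrite /ball /=.
Qed.

Lemma unbhs {R : realType} {X : topologicalType} (f : {uniform X -> R}) (e : R) :
  0 < e -> nbhs f [set h : {uniform X -> R} | forall x, `|f x - h x| < e].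
Proof.
move=> e0; apply/uniform_nbhs; exists [set xy | ball xy.1 e xy.2]; split.
  exact: (entourage_ball _ (PosNum e0)).
by move=> h hE x; have := hE x I.
Qed.

Lemma Tnbhs_pre {R : realType} {X : topologicalType} (f : CX01 R X)
   (V : set {uniform X -> R}) : nbhs (sval f) V -> nbhs f (sval @^-1` V).
Proof.
rewrite nbhsE => -[U [oU Uf] UV].
rewrite nbhsE; exists (sval @^-1` U); first split => //.
  by exists U.
by move=> z /= /UV.
Qed.

Lemma TnbhsP {R : realType} {X : topologicalType} (f : CX01 R X) (O : set (CX01 R X)) :
  nbhs f O -> exists2 e : R, 0 < e & forall f' : CX01 R X,
     (forall x, `|sval f x - sval f' x| < e) -> O f'.
Proof.
rewrite nbhsE => -[A [oA Af] AO].
have [U oU AU] := Topen oA.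
have : nbhs (sval f) U by apply: open_nbhs_nbhs; split => //; rewrite AU in Af.
move/unbhsP => [e e0 He]; exists e => // f' Hf'; apply: AO; rewrite AU /=.
exact: He.
Qed.

Lemma Tnbhs {R : realType} {X : topologicalType} (f : CX01 R X) {e : R} :
  0 < e -> nbhs f [set f' : CX01 R X | forall x, `|sval f x - sval f' x| < e].
Proof.
move=> e0; apply: (@Tnbhs_pre R X f [set h : {uniform X -> R} | forall x, `|sval f x - h x| < e]).
exact: unbhs.
Qed.


Lemma Tcont_UC {R : realType} {X K : topologicalType} (g : K -> CX01 R X) :
  continuous g -> forall k (e : R), 0 < e ->
  \forall k' \near k, forall x, `|sval (g k) x - sval (g k') x| < e.
Proof. by move=> cg k e e0; have := cg k _ (Tnbhs (g k) e0). Qed.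

Lemma UC_Tcont {R : realType} {X K : topologicalType} (h : K -> CX01 R X) :
  (forall k (e : R), 0 < e ->
  \forall k' \near k, forall x, `|sval (h k) x - sval (h k') x| < e) ->
  continuous h.
Proof.
move=> H k O /TnbhsP [e e0 He]; have := H k e e0.
by apply: filterS => k' Hk'; exact: He.
Qed.

Lemma stepA {R : realType} {X K : topologicalType} (g0 : K -> CX01 R X)
  (cg : continuous g0) (W : set {compact-open, K -> CX01 R X}) :
  open W -> W g0 -> exists2 d : R, 0 < d & forall h : K -> CX01 R X,
    (forall k x, `|sval (g0 k) x - sval (h k) x| < d) -> W h.
Proof.
move=> oW Wg0.
pose Fd := filter_from [set d : R | 0 < d]
  (fun d => [set h : {compact-open, K -> CX01 R X} |
     forall k x, `|sval (g0 k) x - sval (h k) x| < d]).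
have FF : Filter Fd.
  apply: filter_from_filter; first by exists 1; rewrite /= ltr01.
  move=> i j i0 j0; exists (Num.min i j).
    by rewrite /= lt_min; apply/andP.
  by move=> h /= Hh; split => k x; have := Hh k x; rewrite lt_min => /andP[].
have cv : Fd --> (g0 : {compact-open, K -> CX01 R X}).
  apply/compact_open_cvgP => K' O cK' oO g0KO.
  have := (compact_near_coveringP K').1 cK' _ Fd (fun h k => O (h k)) FF.
  case.
    move=> k K'k.
    have : nbhs (g0 k) O by apply: open_nbhs_nbhs; split => //; apply: g0KO; exists k.
    move/TnbhsP => [e e0 He].
    have e20 : 0 < e / 2 by rewrite divr_gt0.
    exists ([set k' | forall x, `|sval (g0 k) x - sval (g0 k') x| < e / 2],
       [set h : {compact-open, K -> CX01 R X} |
        forall k x, `|sval (g0 k) x - sval (h k) x| < e / 2]).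
      split; first exact: Tcont_UC.
      by exists (e / 2).
    case=> k' h /= [H1 H2]; apply: He => x.
    rewrite (le_lt_trans (ler_distD (sval (g0 k') x) _ _)) //.
    by rewrite (splitr e) ltrD.
  move=> d d0 Dd; exists d => // h /Dd hK' _ [k K'k <-].
  exact: hK'.
have := cv W (open_nbhs_nbhs (conj oW Wg0)).
by case=> d d0 Hd; exists d => // h Hh; exact: (Hd h).
Qed.


Definition clamp {R : realType} (a b t : R) := Num.max a (Num.min b t).

Lemma norm_le_help {R : realType} (x y : R) : x <= `|y| -> - x <= `|y| -> `|x| <= `|y|.
Proof. by move=> h1 h2; rewrite ler_norml h1 andbT lerNl. Qed.

Lemma clamp_lip {R : realType} (a b u v : R) : `|clamp a b u - clamp a b v| <= `|u - v|.
Proof.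
have h1 := ler_norm (u - v); have h2 := ler_norm (v - u); rewrite distrC in h2.
rewrite /clamp; apply: norm_le_help; rewrite /Num.max /Num.min;
  case: (ltP b u) => ?; case: (ltP b v) => ?;
  repeat case: ifPn; rewrite -?leNgt; move=> *; lra.
Qed.

Lemma compact_fin {T : topologicalType} {I : choiceType} (A : set T) (P : I -> set T) :
  compact A -> (forall x, A x -> exists i, nbhs x (P i)) ->
  exists s : seq I, forall x, A x -> exists2 i, i \in s & P i x.
Proof.
move=> cA HP.
pose F := filter_from [set: seq I] (fun s0 => [set s : seq I | {subset s0 <= s}]).
have FF : Filter F.
  apply: filter_from_filter; first by exists [::].
  move=> s0 s1 _ _; exists (s0 ++ s1) => // s /= H.
  by split => x xs; apply: H; rewrite mem_cat xs ?orbT.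
have := (compact_near_coveringP A).1 cA _ F (fun s x => exists2 i, i \in s & P i x) FF.
case.
  move=> x Ax; have [i Pi] := HP x Ax.
  exists (P i, [set s : seq I | {subset [:: i] <= s}]); first by split => //; exists [:: i].
  by case=> x' s /= [Px' Hs]; exists i => //; apply: Hs; rewrite inE.
by move=> s0 _ Hs0; exists s0; apply: Hs0.
Qed.

Lemma near_all_seq {T : Type} {I : eqType} (F : set_system T) (s : seq I) (P : I -> set T) :
  Filter F -> (forall i, i \in s -> F (P i)) ->
  F [set x | forall i, i \in s -> P i x].
Proof.
move=> FF; elim: s => [|j s IH] H.
  by apply: filterS filterT => x _ i.
have Fj : F (P j) by apply: H; rewrite inE eqxx.
have Fs : F [set x | forall i, i \in s -> P i x].
  by apply: IH => i iS; apply: H; rewrite inE iS orbT.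
apply: filterS (filterI Fj Fs) => x [Pj Ps] i; rewrite inE => /orP[/eqP -> //|].
exact: Ps.
Qed.

Lemma zd_piece {X : topologicalType} (Y : set X) : closed Y -> zero_dim_subspace Y ->
  forall y, Y y -> forall U, nbhs y U ->
  exists A : set X, exists V : set X,
    [/\ A y, A `<=` U, open V, A = Y `&` V & closed A /\ closed (Y `\` A)].
Proof.
move=> cY hY0 y Yy U nU.
have oU' : open (sval @^-1` (interior U) : set (set_type Y)).
  by exists (interior U) => //; exact: open_interior.
have := hY0 (exist _ y (mem_set Yy)) _ oU'; case; first by [].
move=> V' [[oV' cV'] V'y V'U].
move: oV' => [Vo oVo EV].
have : open (~` V') by rewrite openC.
move=> [Co oCo ECo].
have HV : forall x (p : x \in Y), V' (exist _ x p) <-> Vo x.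
  by move=> x p; rewrite -EV.
have HC : forall x (p : x \in Y), V' (exist _ x p) <-> ~ Co x.
  move=> x p; have := congr1 (fun S => S (exist _ x p)) ECo => /= E.
  by rewrite E /=; split => [h /(_ h)|/contrapT].
exists (Y `&` Vo), Vo; split => //.
- by split => //; apply/(HV y (mem_set Yy)).
- move=> x [Yx Vx]; apply: interior_subset.
  by apply: (V'U (exist _ x (mem_set Yx))); apply/(HV x (mem_set Yx)).
- split.
    have -> : Y `&` Vo = Y `&` ~` Co.
      apply/seteqP; split => x [Yx H]; split => //.
        by apply/(HC x (mem_set Yx))/(HV x (mem_set Yx)).
      by apply/(HV x (mem_set Yx))/(HC x (mem_set Yx)).
    by apply: closedI => //; rewrite closedC.
  have -> : Y `\` (Y `&` Vo) = Y `&` ~` Vo.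
    apply/seteqP; split => x [Yx H]; split => //.
      by move=> Vx; apply: H.
    by case=> _ Vx; apply: H.
  by apply: closedI => //; rewrite closedC.
Qed.

Lemma urysohn01 {R : realType} {X : topologicalType} :
  hausdorff_space X -> compact [set: X] -> forall A B : set X,
  closed A -> closed B -> A `&` B = set0 ->
  exists f : X -> R, [/\ continuous f, forall x, 0 <= f x <= 1,
    forall x, A x -> f x = 0 & forall x, B x -> f x = 1].
Proof.
move=> hX cX A B cA cB AB.
have nX := compact_normal hX cX.
have := (@normal_separatorP R X).1 nX A B cA cB AB.
move/(@uniform_separatorP X R) => [f [cf rf fA fB]].
exists f; split => //.
- by move=> x; have := rf (f x) (ex_intro2 _ _ x I erefl); rewrite /= in_itv.
- by move=> x Ax; apply: fA; exists x.
- by move=> x Bx; apply: fB; exists x.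
Qed.

Lemma clamp_id {R : realType} (a b t : R) : a <= t -> t <= b -> clamp a b t = t.
Proof. by move=> aT tb; rewrite /clamp (min_r tb) (max_r aT). Qed.

Lemma clamp_ge {R : realType} (a b t : R) : a <= clamp a b t.
Proof. by rewrite /clamp le_max lexx. Qed.

Lemma clamp_le {R : realType} (a b t : R) : a <= b -> clamp a b t <= b.
Proof. by move=> ab; rewrite /clamp ge_max ab ge_min lexx. Qed.

Lemma clamp_cont {R : realType} {T : topologicalType} (a b : R) (f : T -> R) :
  continuous f -> continuous (fun x => clamp a b (f x)).
Proof.
move=> cf x; rewrite /clamp.
apply: (@continuous_max R T (fun=> a) (fun x => Num.min b (f x))).
  exact: cvg_cst.
apply: (@continuous_min R T (fun=> b) f); first exact: cvg_cst.
exact: cf.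
Qed.

Fixpoint Ssum {R : realType} {X K : Type} (G : K -> X -> R) (phi : X -> X -> R)
   (s : seq X) (k : K) (x : X) : R :=
  match s with
  | [::] => 0
  | e :: s' => phi e x * (G k e - G k x) + (1 - phi e x) * Ssum G phi s' k x
  end.

Lemma Ssum_cont {R : realType} {X : topologicalType} {K : Type} (G : K -> X -> R)
  (phi : X -> X -> R) : (forall k, continuous (G k)) -> (forall e, continuous (phi e)) ->
  forall s k, continuous (Ssum G phi s k).
Proof.
move=> cG cphi; elim=> [|e s IH] k /=; first by move=> x; exact: cvg_cst.
move=> x.
apply: cvgD.
  apply: cvgM; first exact: cphi.
  by apply: cvgB; [exact: cvg_cst|exact: cG].
apply: cvgM; last exact: IH.
by apply: cvgB; [exact: cvg_cst|exact: cphi].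
Qed.

Lemma Ssum_lip {R : realType} {X K : Type} (G : K -> X -> R) (phi : X -> X -> R) :
  (forall e x, 0 <= phi e x <= 1) ->
  forall s k k' (eta : R), (forall x, `|G k x - G k' x| <= eta) ->
  forall x, `|Ssum G phi s k x - Ssum G phi s k' x| <= (size s)%:R * (2 * eta).
Proof.
move=> hphi s k k' eta H x.
have eta0 : 0 <= eta := le_trans (normr_ge0 _) (H x).
elim: s => [|e s IH] /=; first by rewrite subrr normr0 mul0r.
set p := phi e x; set S := Ssum G phi s k x; set S' := Ssum G phi s k' x.
have [p0 p1] : 0 <= p /\ p <= 1 by have /andP[] := hphi e x.
have -> : p * (G k e - G k x) + (1 - p) * S - (p * (G k' e - G k' x) + (1 - p) * S')
  = p * ((G k e - G k' e) - (G k x - G k' x)) + (1 - p) * (S - S') by ring.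
set A := (G k e - G k' e) - (G k x - G k' x).
have hA : `|A| <= 2 * eta.
  rewrite (le_trans (ler_normB _ _)) // mulr2n mulrDl mul1r.
  by apply: lerD; apply: H.
have p1' : 0 <= 1 - p by rewrite subr_ge0.
rewrite (le_trans (ler_normD _ _)) // !normrM (ger0_norm p0) (ger0_norm p1').
have hA0 := normr_ge0 A; have hB0 := normr_ge0 (S - S').
move: IH; set B := `|S - S'|; set N := (size s)%:R => IH.
have N0 : 0 <= N by rewrite /N ler0n.
have h1 : p * `|A| <= p * (2 * eta) := ler_wpM2l p0 hA.
have h2 : (1 - p) * B <= (1 - p) * (N * (2 * eta)) by rewrite ler_wpM2l // subr_ge0.
have h3 : 0 <= p * (N * (2 * eta)) by rewrite !mulr_ge0.
have h4 : 0 <= (1 - p) * (2 * eta) by rewrite !mulr_ge0 // subr_ge0.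
rewrite -addn1 natrD -/N.
lra.
Qed.

Lemma Ssum_cover {R : realType} {X : eqType} {K : Type} (G : K -> X -> R) (phi : X -> X -> R)
  (Y : set X) (A : X -> set X) :
  (forall e y, A e y -> phi e y = 1) -> (forall e y, Y y -> ~ A e y -> phi e y = 0) ->
  forall (s : seq X) k y, Y y -> (exists2 e, e \in s & A e y) ->
  exists2 e, e \in s & A e y /\ Ssum G phi s k y = G k e - G k y.
Proof.
move=> h1 h0; elim=> [|e0 s IH] k y Yy [e es Aey]; first by rewrite in_nil in es.
have [Ae0|nAe0] := pselect (A e0 y).
  exists e0; first by rewrite inE eqxx.
  by split => //=; rewrite h1 // subrr mul0r addr0 mul1r.
have es' : e \in s.
  move: es; rewrite inE => /orP[/eqP Ee|//].
  by rewrite Ee in Aey.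
have [e' e's [Ae'y HS]] := IH k y Yy (ex_intro2 _ _ e es' Aey).
exists e'; first by rewrite inE e's orbT.
by split => //=; rewrite h0 // mul0r add0r subr0 mul1r.
Qed.


Lemma stepB {R : realType} {X K : topologicalType} (hXc : compact [set: X])
  (hXh : hausdorff_space X) (Y : set X) (hYc : closed Y) (hY0 : zero_dim_subspace Y)
  (cK : compact [set: K]) (g0 : K -> CX01 R X) (cg : continuous g0) (d : R) (d0 : 0 < d) :
  exists h : K -> CX01 R X, [/\ continuous h,
    forall k x, `|sval (g0 k) x - sval (h k) x| < d &
    forall k, finite_set ((sval (h k) : X -> R) @` Y)].
Proof.
pose G := fun k x => (sval (g0 k) : X -> R) x.
have G01 : forall k, continuous (G k) /\ forall x, 0 <= G k x <= 1.
  by move=> k; have := set_mem (svalP (g0 k)).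
have cG : forall k, continuous (G k) by move=> k; case: (G01 k).
have rG : forall k x, 0 <= G k x <= 1 by move=> k; case: (G01 k).
have UC := Tcont_UC g0 cg.
pose e := d / 6.
have e0 : 0 < e by rewrite divr_gt0.
have [s1 Hs1] := @compact_fin K K [set: K]
   (fun j => [set k' | forall x, `|G j x - G k' x| < e]) cK
   (fun k _ => ex_intro _ k (UC k e e0)).
pose U := fun y => [set x | forall j, j \in s1 -> `|G j y - G j x| < e].
have nU : forall y, nbhs y (U y).
  move=> y; apply: (@near_all_seq X K (nbhs y) s1 (fun j x => `|G j y - G j x| < e)).
  move=> j _; have := cG j y _ (nbhsx_ballx (G j y) e e0).
  move=> H; have H2 : nbhs y [set x | ball (G j y) e (G j x)] := H.
  by apply: (filterS _ H2) => x; rewrite /ball /=.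
have HAV : forall y : X, exists AV : set X * set X,
  [/\ closed AV.1, closed (Y `\` AV.1), AV.1 `<=` Y &
     (Y y -> [/\ AV.1 y, AV.1 `<=` U y, open AV.2 & AV.1 = Y `&` AV.2])]
  /\ (~ Y y -> AV.1 = set0).
  move=> y; have [Yy|nYy] := pselect (Y y).
    have [A [V [Ay AU oV AE [cA cYA]]]] := zd_piece Y hYc hY0 y Yy (U y) (nU y).
    exists (A, V); split => //; split => //.
    by rewrite AE; apply: subIsetl.
  exists (set0, set0); split => //; split => //=.
  - exact: closed0.
  - by rewrite setD0.
have [AV HAVf] := choice HAV.
pose A := fun y => (AV y).1; pose V := fun y => (AV y).2.
have cY : compact Y := subclosed_compact hYc hXc (fun _ _ => I).
have Hcov : forall y, Y y -> exists i, nbhs y [set x | Y i /\ V i x].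
  move=> y Yy; exists y.
  have [[_ _ _ /(_ Yy) [Ayy _ oV AE]] _] := HAVf y.
  have Vyy : V y y by move: Ayy; rewrite /A AE => -[].
  have := open_nbhs_nbhs (conj oV Vyy).
  by apply: filterS => x Vx; split.
have [s2 Hs2] := @compact_fin X X Y (fun e => [set x | Y e /\ V e x]) cY Hcov.
have Hphi : forall e : X, exists f : X -> R, [/\ continuous f, forall x, 0 <= f x <= 1,
    forall x, (Y `\` A e) x -> f x = 0 & forall x, A e x -> f x = 1].
  move=> e0'; have [[cA cYA _ _] _] := HAVf e0'.
  apply: urysohn01 => //.
  by rewrite -subset0 => x [[_ nA] Ax].
have [phi Hphi'] := choice Hphi.
have cphi : forall e, continuous (phi e) by move=> e'; case: (Hphi' e').
have rphi : forall e x, 0 <= phi e x <= 1 by move=> e'; case: (Hphi' e').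
pose d' := d / 2.
have d'0 : 0 < d' by rewrite divr_gt0.
pose hv := fun k x => clamp 0 1 (G k x + clamp (- d') d' (Ssum G phi s2 k x)).
have hv_cont : forall k, continuous (hv k).
  move=> k; apply: clamp_cont => x; apply: cvgD; first exact: cG.
  exact: (clamp_cont (- d') d' _ (Ssum_cont G phi cG cphi s2 k) x).
have hv01 : forall k x, 0 <= hv k x <= 1.
  by move=> k x; rewrite clamp_ge clamp_le.
pose h := fun k => (exist (fun f => f \in CX01_set R X) (hv k : {uniform X -> R})
   (mem_set (conj (hv_cont k) (hv01 k))) : CX01 R X).
exists h; split.
- apply: UC_Tcont => k eps eps0.
  pose N : R := (size s2)%:R.
  have N0 : 0 <= N by rewrite /N ler0n.
  have N2 : 0 < 2 * N + 2 by rewrite ltr_wpDl // mulr_ge0.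
  pose eta := eps / (2 * N + 2).
  have eta0 : 0 < eta by rewrite divr_gt0.
  have Heps : eps = eta * (2 * N + 2) by rewrite /eta divfK // gt_eqF.
  have := UC k eta eta0; apply: filterS => k' Hk' x.
  have HG : forall x, `|G k x - G k' x| <= eta by move=> z; exact: ltW (Hk' z).
  have HS := Ssum_lip G phi rphi s2 k k' eta HG x.
  rewrite /= /hv.
  rewrite (le_lt_trans (clamp_lip _ _ _ _)) //.
  set c := clamp (- d') d' (Ssum G phi s2 k x).
  set c' := clamp (- d') d' (Ssum G phi s2 k' x).
  have Hc : `|c - c'| <= `|Ssum G phi s2 k x - Ssum G phi s2 k' x| by exact: clamp_lip.
  have E : G k x + c - (G k' x + c') = (G k x - G k' x) + (c - c') by ring.
  rewrite E (le_lt_trans (ler_normD _ _)) //.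
  have := Hk' x; rewrite -/(G k x) -/(G k' x) => Hx.
  move: HS; rewrite -/N => HS.
  lra.
- move=> k x; rewrite /= /hv -/(G k x).
  have /andP[G0 G1] := rG k x.
  rewrite -{1}(clamp_id _ _ _ G0 G1) (le_lt_trans (clamp_lip _ _ _ _)) //.
  set c := clamp (- d') d' (Ssum G phi s2 k x).
  rewrite opprD addrA subrr add0r normrN.
  have dd : - d' <= d' by lra.
  have : `|c| <= d' by rewrite ler_norml clamp_ge clamp_le.
  rewrite /d' => Hc; lra.
- move=> k; apply: (sub_finite_set _ (finite_image (G k) (finite_seq s2))).
  move=> _ [y Yy <-]; rewrite /= /hv.
  have [i is2 [Yi Viy]] := Hs2 y Yy.
  have Aiy : A i y.
    have [[_ _ _ /(_ Yi) [_ _ _ AE]] _] := HAVf i.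
    by rewrite /A AE.
  have h1 : forall e y, A e y -> phi e y = 1.
    by move=> e1 y1 Hy1; case: (Hphi' e1) => _ _ _ ->.
  have h0 : forall e y, Y y -> ~ A e y -> phi e y = 0.
    by move=> e1 y1 Yy1 nA; case: (Hphi' e1) => _ _ -> //.
  have [e' e's [Ae'y HS]] := Ssum_cover G phi Y A h1 h0 s2 k y Yy (ex_intro2 _ _ i is2 Aiy).
  have Ye' : Y e'.
    have [//|nY] := pselect (Y e'); have [_ /(_ nY) A0] := HAVf e'.
    by move: Ae'y; rewrite /A A0.
  have [[_ _ _ /(_ Ye') [_ AU _ _]] _] := HAVf e'.
  have Uy := AU y Ae'y.
  have [j js1 Hj] := Hs1 k I.
  have Hb : `|G k e' - G k y| < d'.
    have h3 := Uy j js1; have h4 := Hj e'; have h5 := Hj y.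
    have E : G k e' - G k y = (G j e' - G j y) - (G j e' - G k e') + (G j y - G k y) by ring.
    rewrite E (le_lt_trans (ler_normD _ _)) // (le_lt_trans (lerD (ler_normB _ _) (lexx _))) //.
    rewrite /d'; move: h3 h4 h5; rewrite /e => h3 h4 h5; lra.
  rewrite HS (clamp_id (- d') d'); last 2 first.
  - by move: Hb; rewrite ltr_norml => /andP[/ltW].
  - by move: Hb; rewrite ltr_norml => /andP[_ /ltW].
  rewrite addrC subrK; have /andP[G0 G1] := rG k e'.
  by exists e' => //; rewrite clamp_id.
Qed.


Theorem lemma4 (R : realType) (X : topologicalType)
  (hXc : compact [set: X]) (hXh : hausdorff_space X)
  (Y : set X) (hYc : closed Y) (hY0 : zero_dim_subspace Y)
  (F : set (CX01 R X)) (hFc : closed F)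
  (hFinf : forall f : CX01 R X, F f -> infinite_set ((sval f : X -> R) @` Y)) :
  Z_set F.
Proof.
split => // K cK hK O [g Og] oO.
have [W oW OW] := Copen _ _ _ oO.
have Wg : W (sval g) by rewrite OW in Og.
have cg : continuous (sval g : K -> CX01 R X) := set_mem (svalP g).
have [d d0 Hd] := stepA (sval g) cg W oW Wg.
have [h [ch hd hfin]] := stepB hXc hXh Y hYc hY0 cK (sval g) cg d d0.
pose hh := (exist (fun f => f \in Cmaps_set K (CX01 R X))
   (h : {compact-open, K -> CX01 R X}) (mem_set ch) : Cmaps K (CX01 R X)).
exists hh; split.
  by rewrite OW /=; apply: Hd.
by move=> k /hFinf; apply; exact: hfin.
Qed.
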